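(* For every $n$ and every $D\le n^{1/4}$, there exists an unweighted directed graph $G$ with $\Theta(n)$ vertices and diameter $D$ such that every subgraph $H$ of $G$ on the same vertex set with $\mathrm{diam}(H)<1.5\,\mathrm{diam}(G)-1$ contains $\Omega(n^{1.5})$ edges.
   Context: $\mathrm{diam}(G)=\max_{u,v}d_G(u,v)$ where $d_G(u,v)$ is the directed shortest-path distance. A subgraph of $G=(V,E)$ is a graph $(V,E')$ with $E'\subseteq E$. *)

(* Defs.v *)
From mathcomp Require Import all_boot.
Set Implicit Arguments. Unset Strict Implicit. Unset Printing Implicit Defensive.

Definition dist_le (T : finType) (e : rel T) (k : nat) (u v : T) : Prop :=
  exists p : seq T, [/\ path e u p, last u p = v & size p <= k].

Definition diam_is (T : finType) (e : rel T) (D : nat) : Prop :=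
  (forall u v : T, dist_le e D u v) /\
  (exists u v : T, forall k, dist_le e k u v -> D <= k).

(* diam(h) < 1.5 * D - 1, i.e. every pair is at distance k with k < 1.5 D - 1,
   equivalently 2k + 2 < 3D  (an infinite diameter is never below the bound) *)
Definition diam_lt_3half_minus1 (T : finType) (h : rel T) (D : nat) : Prop :=
  forall u v : T, exists k, 2 * k + 2 < 3 * D /\ dist_le h k u v.

Definition subgraph (T : finType) (h e : rel T) : Prop :=
  forall u v, h u v -> e u v.

Definition nedges (T : finType) (e : rel T) : nat :=
  #|[set p : T * T | e p.1 p.2]|.

(* Main.v *)
Require Import Defs.
From mathcomp Require Import all_boot zify.
Set Implicit Arguments. Unset Strict Implicit. Unset Printing Implicit Defensive.

Lemma dist0 (T : finType) (e : rel T) u : dist_le e 0 u u.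
Proof. by exists [::]. Qed.

Lemma dist1 (T : finType) (e : rel T) u v : e u v -> dist_le e 1 u v.
Proof. by move=> h; exists [:: v]; rewrite /= h. Qed.

Lemma dist_trans (T : finType) (e : rel T) a b u v w :
  dist_le e a u v -> dist_le e b v w -> dist_le e (a + b) u w.
Proof.
move=> [p [pp lp sp]] [q [pq lq sq]]; exists (p ++ q); split.
- by rewrite cat_path pp lp.
- by rewrite last_cat lp.
- by rewrite size_cat leq_add.
Qed.

Lemma dist_mono (T : finType) (e : rel T) a b u v :
  a <= b -> dist_le e a u v -> dist_le e b u v.
Proof. move=> hab [p [pp lp sp]]; exists p; split => //; exact: leq_trans hab. Qed.

Lemma dist_sub (T : finType) (e e' : rel T) k u v :
  (forall x y, e x y -> e' x y) -> dist_le e k u v -> dist_le e' k u v.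
Proof. move=> h [p [pp lp sp]]; exists p; split => //; exact: sub_path pp. Qed.

Lemma dist_map (T T' : finType) (e : rel T) (e' : rel T') (f : T -> T') k u v :
  (forall x y, e x y -> e' (f x) (f y)) -> dist_le e k u v -> dist_le e' k (f u) (f v).
Proof.
move=> h [p [pp lp sp]]; exists (map f p); split.
- by rewrite path_map; apply: sub_path pp => x y /h.
- by rewrite last_map lp.
- by rewrite size_map.
Qed.

Lemma potential (T : finType) (e : rel T) (f : T -> nat) u p :
  (forall x y, e x y -> f x <= (f y).+1) -> path e u p -> f u <= f (last u p) + size p.
Proof.
move=> h; elim: p u => [|v p IH] u /=; first by rewrite addn0.
move=> /andP [euv pp]; have := h _ _ euv; have := IH _ pp; lia.
Qed.

Lemma vacuous (T : finType) (G H : rel T) D :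
  diam_is G D -> subgraph H G -> diam_lt_3half_minus1 H D -> 2 < D.
Proof.
move=> [_ [u [v hw]]] hs hl; have [k [hk hd]] := hl u v.
have := hw k (dist_sub hs hd); lia.
Qed.

Lemma transfer (T : finType) (G : rel T) (D : nat) (Q : nat -> Prop) :
  (forall a b, a <= b -> Q a -> Q b) -> irreflexive G -> diam_is G D ->
  (forall H, subgraph H G -> diam_lt_3half_minus1 H D -> Q (nedges H)) ->
  exists G' : rel 'I_(#|T|), [/\ irreflexive G', diam_is G' D &
     forall H', subgraph H' G' -> diam_lt_3half_minus1 H' D -> Q (nedges H')].
Proof.
move=> Qmon irr [dall [u0 [v0 hw]]] hH.
pose g := @enum_rank T. pose h := @enum_val T predT.
have gK : cancel g h by exact: enum_rankK.
have hK : cancel h g by exact: enum_valK.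
exists (fun x y => G (h x) (h y)); split.
- by move=> x; rewrite irr.
- split.
  + move=> x y; rewrite -(hK x) -(hK y); apply: dist_map (dall _ _) => a b.
    by rewrite !gK.
  + exists (g u0), (g v0) => k hk; apply: hw; rewrite -(gK u0) -(gK v0).
    by apply: dist_map hk => a b.
- move=> H' hs hl; pose H := fun a b => H' (g a) (g b).
  have : Q (nedges H).
    apply: hH.
    + by move=> a b /hs; rewrite !gK.
    + move=> a b; have [k [hk hd]] := hl (g a) (g b); exists k; split => //.
      rewrite -(gK a) -(gK b); apply: dist_map hd => x y.
      by rewrite /H !hK.
  apply: Qmon; rewrite /nedges.
  have inj : injective (fun p : T * T => (g p.1, g p.2)).
    by move=> [a b] [c d] /= [] /(can_inj gK) -> /(can_inj gK) ->.
  rewrite -(card_imset _ inj); apply: subset_leq_card; apply/subsetP => q.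
  by move=> /imsetP [p]; rewrite !inE => hp ->.
Qed.

Definition VT (m L L' : nat) : finType := ((('I_m * 'I_L.+1) + ('I_m * 'I_L'.+1)) + unit)%type.

Definition Gr (m L L' : nat) : rel (VT m L L') := fun u v =>
  match u, v with
  | inl (inl (i, s)), inl (inl (i', s')) => (i == i') && ((val s).+1 == val s')
  | inl (inl (i, s)), inl (inr (j, s')) => (val s == L) && (val s' == 0)
  | inl (inr (j, s)), inl (inr (j', s')) => (j == j') && ((val s).+1 == val s')
  | inl (inr _), inr _ => true
  | inr _, inl (inl (i, s)) => val s == 0
  | _, _ => false
  end.

Definition pot (m L L' : nat) (oi : option 'I_m) (j0 : 'I_m) (u : VT m L L') : nat :=
  match u with
  | inl (inl (i, s)) => (L - s) + (if oi == Some i then L + L' + 4 else L' + 1)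
  | inl (inr (j, s)) => if j == j0 then L' - s else L + L' + 3
  | inr _ => L + L' + 2
  end.

Definition Pv m L L' (i : 'I_m) (s : 'I_L.+1) : VT m L L' := inl (inl (i, s)).
Definition Qv m L L' (j : 'I_m) (s : 'I_L'.+1) : VT m L L' := inl (inr (j, s)).

Lemma pot_edge m L L' oi j0 (u v : VT m L L') : Gr u v ->
  (match oi with Some i => (u, v) != (Pv L' i ord_max, Qv L j0 ord0) | None => true end) ->
  pot oi j0 u <= (pot oi j0 v).+1.
Proof.
case: u => [[[i s]|[j s]]|[]]; case: v => [[[i' s']|[j' s']]|[]] //=.
- move=> /andP [/eqP <- /eqP hs] _; have := ltn_ord s'; case: ifP => _; lia.
- move=> /andP [/eqP hs /eqP hs'] hne.
  case: (oi =P Some i) => [hoi|hoi].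
  + subst oi; case: (j' =P j0) => [hj|hj].
      exfalso; move: hne; subst j'.
      have -> : s = ord_max by apply: val_inj.
      have -> : s' = ord0 by apply: val_inj.
      by rewrite eqxx.
    lia.
  + case: (j' =P j0) => _; lia.
- move=> /andP [/eqP <- /eqP hs] _; have := ltn_ord s'; case: ifP => _; lia.
- move=> _ _; case: ifP => _; lia.
- move=> /eqP hs _; case: ifP => _; lia.
Qed.

Definition Pn m L L' (i : 'I_m) (s : nat) : VT m L L' := inl (inl (i, inord s)).
Definition Qn m L L' (j : 'I_m) (s : nat) : VT m L L' := inl (inr (j, inord s)).
Definition Zv m L L' : VT m L L' := inr tt.
Arguments Pn {m L L'}. Arguments Qn {m L L'}. Arguments Zv {m L L'}.


Lemma Ppath m L L' (i : 'I_m) s t : s + t <= L ->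
  dist_le (@Gr m L L') t (Pn i s) (Pn i (s + t)).
Proof.
elim: t => [|t IH] h; first by rewrite addn0; apply: dist0.
rewrite -addn1; apply: dist_trans (IH _) (dist1 _); first lia.
rewrite /= eqxx /= !inordK; lia.
Qed.

Lemma Qpath m L L' (j : 'I_m) s t : s + t <= L' ->
  dist_le (@Gr m L L') t (Qn j s) (Qn j (s + t)).
Proof.
elim: t => [|t IH] h; first by rewrite addn0; apply: dist0.
rewrite -addn1; apply: dist_trans (IH _) (dist1 _); first lia.
rewrite /= eqxx /= !inordK; lia.
Qed.

Lemma dPQ m L L' (i j : 'I_m) s s' : s <= L -> s' <= L' ->
  dist_le (@Gr m L L') (L - s + 1 + s') (Pn i s) (Qn j s').
Proof.
move=> hs hs'.
have e1 := @Ppath m L L' i s (L - s) ltac:(lia).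
have e3 := @Qpath m L L' j 0 s' ltac:(lia).
rewrite add0n in e3.
apply: dist_trans e3; apply: dist_trans e1 (dist1 _).
by rewrite /= !inordK //; lia.
Qed.

Lemma dQZ m L L' (j : 'I_m) (s : 'I_L'.+1) :
  dist_le (@Gr m L L') 1 (inl (inr (j, s))) Zv.
Proof. exact: dist1. Qed.

Lemma dZP m L L' (i : 'I_m) s : s <= L -> dist_le (@Gr m L L') (1 + s) Zv (Pn i s).
Proof.
move=> hs; have e := @Ppath m L L' i 0 s ltac:(lia); rewrite add0n in e.
apply: dist_trans _ e; apply: dist1; by rewrite /= inordK.
Qed.

Lemma dZall m L L' (v : VT m L L') : dist_le (@Gr m L L') (L + L' + 2) Zv v.
Proof.
case: v => [[[i s]|[j s]]|[]].
- have -> : inl (inl (i, s)) = Pn i s :> VT m L L' by rewrite /Pn inord_val.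
  have h := @dZP m L L' i s (ltn_ord s : val s <= L). apply: dist_mono h; have := ltn_ord s; lia.
- have -> : inl (inr (j, s)) = Qn j s :> VT m L L' by rewrite /Qn inord_val.
  have h := dist_trans (@dZP m L L' j L (leqnn L)) (@dPQ m L L' j j L s (leqnn L) (ltn_ord s : val s <= L')).
  apply: dist_mono h; have := ltn_ord s; lia.
- by apply: dist_mono (dist0 _ _).
Qed.

Lemma main_graph m L L' : 1 < m -> L <= L' -> L' <= L.+1 ->
 [/\ irreflexive (@Gr m L L'), diam_is (@Gr m L L') (L + L' + 3) &
   forall H, subgraph H (@Gr m L L') -> diam_lt_3half_minus1 H (L + L' + 3) ->
     m * m <= nedges H].
Proof.
move=> hm hLL hLL'.
pose j0 : 'I_m := Ordinal (ltnW hm). pose j1 : 'I_m := Ordinal hm.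
split.
- move=> [[[i s]|[j s]]|[]] //=; by rewrite eqxx /= ?eqn_leq ?ltnn ?andbF.
- split.
  + move=> u v; case: u => [[[i s]|[j s]]|[]].
    * have -> : inl (inl (i, s)) = Pn i s :> VT m L L' by rewrite /Pn inord_val.
      have hs : (s : nat) <= L by have := ltn_ord s.
      case: v => [[[i' s']|[j' s']]|[]].
      -- have -> : inl (inl (i', s')) = Pn i' s' :> VT m L L' by rewrite /Pn inord_val.
         have hs' : (s' : nat) <= L by have := ltn_ord s'.
         have h := dist_trans (dist_trans (@dPQ m L L' i i s 0 hs (leq0n _)) (@dQZ m L L' i (inord 0)))
                     (@dZP m L L' i' s' hs').
         apply: dist_mono h; lia.
      -- have -> : inl (inr (j', s')) = Qn j' s' :> VT m L L' by rewrite /Qn inord_val.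
         have hs' : (s' : nat) <= L' by have := ltn_ord s'.
         apply: dist_mono (@dPQ m L L' i j' s s' hs hs'); lia.
      -- idtac.
         have h := dist_trans (@dPQ m L L' i i s 0 hs (leq0n _)) (@dQZ m L L' i (inord 0)).
         apply: dist_mono h; lia.
    * have h := dist_trans (@dQZ m L L' j s) (@dZall m L L' v).
      apply: dist_mono h; lia.
    * apply: dist_mono (@dZall m L L' v); lia.
  + exists (Qv L j1 ord0), (Qv L j0 ord_max) => k [p [pp lp sp]].
    have := @potential _ _ (@pot m L L' None j0) _ p (fun x y hxy => @pot_edge m L L' None j0 x y hxy isT) pp.
    rewrite lp /= (_ : L' - (@ord_max L' : nat) = 0) ?subnn // add0n => h; exact: leq_trans h sp.
- move=> H hs hl.
  have key : forall i j, H (Pv L' i ord_max) (Qv L j ord0).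
    move=> i j; apply/negPn/negP => hn.
    have [k [hk [p [pp lp sp]]]] := hl (Pv L' i ord0) (Qv L j ord_max).
    have hedge : forall x y, H x y -> @pot m L L' (Some i) j x <= (@pot m L L' (Some i) j y).+1.
      move=> x y hxy; apply: pot_edge; first exact: hs.
      apply/negP => /eqP [ex ey]; rewrite ex ey in hxy; by rewrite hxy in hn.
    have := potential hedge pp; rewrite lp /= !eqxx (_ : L' - (@ord_max L' : nat) = 0) ?subnn // add0n => h; have h2 := leq_trans h sp; lia.
  pose f (q : 'I_m * 'I_m) : VT m L L' * VT m L L' := (Pv L' q.1 ord_max, Qv L q.2 ord0).
  have finj : injective f by move=> [a b] [c d] /= [] -> ->.
  have <- : #|f @: [set: 'I_m * 'I_m]| = m * m by rewrite card_imset // cardsT card_prod card_ord.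
  apply: subset_leq_card; apply/subsetP => q /imsetP [[a b] _ ->]; rewrite inE; exact: key.
Qed.

Lemma arith n D : 3 <= D -> D ^ 4 <= n ->
  [/\ D ^ 3 <= n %/ D, n < (n %/ D).+1 * D & n ^ 3 <= 16 * (n %/ D) ^ 4].
Proof.
move=> hD hn; set q := n %/ D.
have hlt : n < q.+1 * D.
  rewrite {1}(divn_eq n D) mulSn addnC ltn_add2r; apply: ltn_pmod; lia.
have h3 : D ^ 3 <= q.
  have : D ^ 3 * D < q.+1 * D by rewrite -expnSr; exact: leq_ltn_trans hn hlt.
  by rewrite ltn_pmul2r ?ltnS //; lia.
have hq1 : 1 <= q by apply: leq_trans h3; rewrite expn_gt0; lia.
split => //.
have h2 : n <= 2 * q * D by apply: ltnW; apply: (leq_trans hlt); rewrite leq_pmul2r; lia.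
have h4 : n ^ 4 <= (2 * q * D) ^ 4 by rewrite leq_exp2r.
have h5 : (2 * q * D) ^ 4 <= 16 * q ^ 4 * n.
  rewrite !expnMn; exact: leq_mul.
have h6 : n ^ 3 * n <= 16 * q ^ 4 * n by rewrite -expnSr; exact: leq_trans h4 h5.
by rewrite leq_pmul2r in h6; [ | apply: leq_trans hn; rewrite expn_gt0; lia].
Qed.

Definition Gs (D n : nat) : rel 'I_n.+2 := fun u v =>
  (u != v) && ~~ [&& D == 2, (u : nat) == 0 & (v : nat) == 1].
Arguments Gs : clear implicits.

Lemma small_graph D n : 1 <= D -> D <= 2 -> 1 <= n ->
  irreflexive (Gs D n) /\ diam_is (Gs D n) D.
Proof.
move=> hD1 hD2 hn; split; first by move=> x; rewrite /Gs eqxx.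
split.
- move=> u v; case: (u =P v) => [<-|huv]; first exact: dist_mono (dist0 _ _).
  case hb: [&& D == 2, (u : nat) == 0 & (v : nat) == 1].
  + move/and3P: hb => [/eqP hD /eqP hu /eqP hv].
    pose w : 'I_n.+2 := inord 2.
    have hw : (w : nat) = 2 by rewrite inordK //; lia.
    exists [:: w; v]; split => //=; last by rewrite hD.
    rewrite andbT; apply/andP; split; rewrite /Gs ?hu ?hv hw /= ?andbF ?andbT; apply/eqP => e.
    * by move: hw; rewrite -e hu.
    * by move: hw; rewrite e hv.
  + apply: dist_mono (dist1 _) => //; by rewrite /Gs hb andbT; apply/eqP.
- exists ord0, (inord 1) => k [p [pp lp sp]].
  have h1 : ((inord 1 : 'I_n.+2) : nat) = 1 by rewrite inordK.
  case: p pp lp sp => [|w [|w' p]] /=.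
  + by move=> _ e; move: h1; rewrite -e.
  + rewrite andbT => hg e; rewrite e /Gs h1 /= in hg.
    case/andP: hg => _ /negP hg; move=> hk; case: (D =P 2) => hd.
      by exfalso; apply: hg; rewrite hd.
    lia.
  + move=> _ _ hk; lia.
Qed.

Theorem theorem1p1 :
  exists c1 c2 c3 : nat, [/\ 0 < c1, 0 < c2, 0 < c3 &
    forall n D : nat, 1 <= D -> D ^ 4 <= n ->
      exists (N : nat) (G : rel 'I_N),
        [/\ n <= c1 * N, N <= c2 * n, irreflexive G, diam_is G D &
            forall H : rel 'I_N, subgraph H G -> diam_lt_3half_minus1 H D ->
              n ^ 3 <= (c3 * nedges H) ^ 2]].
Proof.
exists 3, 3, 4; split => // n D hD hDn.
have hn1 : 1 <= n by apply: leq_trans hDn; rewrite expn_gt0; lia.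
case: (leqP D 2) => hD2.
- have [hirr hdiam] := small_graph hD hD2 hn1.
  exists n.+2, (Gs D n); split => //; try lia.
  move=> H hs hl; have := vacuous hdiam hs hl; lia.
- have [h3 hlt h16] := arith hD2 hDn.
  set m := n %/ D in h3 hlt h16.
  set L := (D - 3) %/ 2. set L' := D - 3 - L.
  have h27 : 3 ^ 3 <= D ^ 3 by rewrite leq_exp2r.
  have hm : 1 < m by apply: leq_trans h3; exact: leq_trans h27.
  have hLL : L <= L' by rewrite /L' /L; lia.
  have hLL' : L' <= L.+1 by rewrite /L' /L; lia.
  have [hirr hdiam hH] := @main_graph m L L' hm hLL hLL'.
  have eD : L + L' + 3 = D by rewrite /L' /L; lia.
  rewrite eD in hdiam hH.
  have [G' [hi' hd' hh']] := @transfer _ _ D (fun x => m * m <= x)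
     (fun a b hab h => leq_trans h hab) hirr hdiam hH.
  exists #|VT m L L'|, G'.
  have hc : #|VT m L L'| = m * L.+1 + m * L'.+1 + 1
    by rewrite /VT !card_sum !card_prod !card_ord card_unit.
  have hDm : D <= m by apply: leq_trans h3; rewrite -[X in X <= _]expn1 leq_pexp2l //; lia.
  have hmD : m * D <= n by rewrite [X in _ <= X](divn_eq n D) leq_addr.
  split => //.
  + rewrite hc; nia.
  + rewrite hc; nia.
  + move=> H hs hl; have hmm := hh' H hs hl.
    apply: (leq_trans h16); rewrite expnMn.
    have : (m * m) ^ 2 <= nedges H ^ 2 by rewrite leq_exp2r.
    rewrite -expnMn (_ : m * m = m ^ 2) ?mulnn // -expnM => h.
    by rewrite expnMn; apply: leq_mul.
Qed.
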